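(* Let $\mathbb L$ be a set of infinite cardinality $\kappa$. Let $d\in\mathbb I$, let $n\ge1$, and for each $t=1,\dots,n$ let $S_t$ be a finite index set and $A^{st}\in\mathbb W$ ($s\in S_t$) sets with $|A^{st}|=\kappa_t$, where $\aleph_0\le\kappa_t<\kappa_u\le\kappa$ whenever $t<u$. Then there exists $i\in\mathbb I$ with $d\subseteq i$ such that $|A^{st}_i|<|A^{ru}_i|$ for all $t<u$, $s\in S_t$, $r\in S_u$.
   Context: A point over $\mathbb L$ is either an element of $\mathbb L$ or a finite tuple $(x_1,\dots,x_n)$, $n\ge1$, of points over $\mathbb L$ ($\mathbb L$ contains no tuples of points); $P$ is the set of all points; $supp(x)=\{x\}$ for $x\in\mathbb L$ and $supp(x_1,\dots,x_n)=\bigcup_k supp(x_k)$. $\mathbb W$ is the family of finitary point sets: $A\subseteq P$ such that $\{a\in A:supp(a)=i\}$ is finite for every finite $i\subseteq\mathbb L$. $\mathbb I=[\mathbb L]^{<\omega}$ is the set of finite subsets of $\mathbb L$, and $A_i=\{a\in A:supp(a)\subseteq i\}$ for $A\in\mathbb W$, $i\in\mathbb I$. *)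

(* Defs.v *)
From HB Require Import structures.
From mathcomp Require Import all_boot.
From mathcomp Require Import boolp classical_sets functions cardinality.
Set Implicit Arguments. Unset Strict Implicit. Unset Printing Implicit Defensive.
Local Open Scope classical_set_scope.

(* Points over L: either an element of L (Atom) or a finite tuple
   (x_1,...,x_n), n >= 1, of points, encoded as Tup x_1 [:: x_2; ...; x_n]. *)
Inductive lpoint (L : Type) : Type :=
| Atom : L -> lpoint L
| Tup : lpoint L -> list (lpoint L) -> lpoint L.

Fixpoint supp (L : Type) (x : lpoint L) : set L :=
  match x with
  | Atom a => [set a]
  | Tup x1 xs =>
      supp x1 `|` (fix supps (l : list (lpoint L)) : set L :=
                     match l with
                     | nil => set0
                     | y :: l' => supp y `|` supps l'
                     end) xs
  end.

Definition finitary (L : Type) (A : set (lpoint L)) : Prop :=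
  forall i : set L, finite_set i -> finite_set [set a | A a /\ supp a = i].

Definition restr (L : Type) (A : set (lpoint L)) (i : set L) : set (lpoint L) :=
  [set a | A a /\ supp a `<=` i].

Definition card_lt (T U : Type) (X : set T) (Y : set U) : Prop :=
  (X #<= Y)%card /\ ~ (Y #<= X)%card.

(* Main.v *)
Require Import Defs.
From HB Require Import structures.
From mathcomp Require Import all_boot.
From mathcomp Require Import boolp classical_sets functions cardinality.
From Stdlib Require List.
From Stdlib Require Import Lia.
From mathcomp Require Import zify.
Local Open Scope classical_set_scope.
Set Implicit Arguments. Unset Strict Implicit.

Definition injon T U (A : set T) (B : set U) (f : T -> U) :=
  (forall x, A x -> B (f x)) /\ (forall x y, A x -> A y -> f x = f y -> x = y).
Definition cle T U (A : set T) (B : set U) := exists f : T -> U, injon A B f.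

Lemma card_cle T U (A : set T) (B : set U) : (A #<= B)%card -> inhabited U -> cle A B.
Proof.
move=> /card_leP [f] [u0].
pose g x := match pselect (A x) with left h => val (f (SigSub (mem_set h))) | right _ => u0 end.
exists g; split.
  move=> x Ax; rewrite /g; case: pselect => // h.
  by have := valP (f (SigSub (mem_set h))); rewrite in_setE.
move=> x y Ax Ay; rewrite /g; case: pselect => // h; case: pselect => // h'.
move=> /val_inj /(@inj _ _ _ f _ _ (in_setT _) (in_setT _)) [].
by [].
Qed.

Lemma cle_card T U (A : set T) (B : set U) : cle A B -> (A #<= B)%card.
Proof.
move=> [f [fAB finj]].
have [g] : $|{injfun A >-> B}|.
  apply/injfunPex; exists f => //; move=> x y; rewrite !in_setE; exact: finj.
exact: inj_card_le.
Qed.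

Lemma cle_trans T U V (A : set T) (B : set U) (C : set V) : cle A B -> cle B C -> cle A C.
Proof.
move=> [f [f1 f2]] [g [g1 g2]]; exists (g \o f); split => [x Ax|x y Ax Ay /= e].
  exact/g1/f1.
by apply: f2 => //; apply: g2 => //; apply: f1.
Qed.

Lemma cle_sub T (A B : set T) : A `<=` B -> cle A B.
Proof. by move=> AB; exists id; split => // x y _ _. Qed.

Lemma cle_refl T (A : set T) : cle A A.
Proof. exact: cle_sub. Qed.

Lemma cle_prod T T' U U' (A : set T) (A' : set T') (B : set U) (B' : set U') :
  cle A B -> cle A' B' -> cle (A `*` A') (B `*` B').
Proof.
move=> [f [f1 f2]] [g [g1 g2]]; exists (fun p => (f p.1, g p.2)); split.
  by move=> [x y] [/= Ax Ay]; split; [apply: f1|apply: g1].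
move=> [x y] [x' y'] [/= Ax Ay] [/= Ax' Ay'] [e1 e2].
by rewrite (f2 _ _ Ax Ax' e1) (g2 _ _ Ay Ay' e2).
Qed.

Lemma cle_inh T U (A : set T) (B : set U) x : cle A B -> A x -> exists y, B y.
Proof. by move=> [f [f1 _]] Ax; exists (f x); apply: f1. Qed.

Lemma cle_empty T U (A : set T) (B : set U) (u : U) : A = set0 -> cle A B.
Proof. by move=> ->; exists (fun=> u); split. Qed.

Lemma cle_image T U (A : set T) (f : T -> U) (t0 : T) : cle (f @` A) A.
Proof.
pose g y := match pselect (exists2 x, A x & f x = y) with
  left h => projT1 (cid2 h) | right _ => t0 end.
exists g; split.
  move=> y [x Ax <-]; rewrite /g; case: pselect => [h|[]]; last by exists x.
  by case: (cid2 h).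
move=> y y' [x Ax <-] [x' Ax' <-]; rewrite /g.
case: pselect => [h|[]]; last by exists x.
case: pselect => [h'|[]]; last by exists x'.
case: (cid2 h) => z Az ez; case: (cid2 h') => z' Az' ez' /= e.
by rewrite -ez -ez' e.
Qed.

Lemma rel_fun T U (A : set T) (R : T -> U -> Prop) (u0 : U) :
  (forall x, A x -> exists y, R x y) -> exists f : T -> U, forall x, A x -> R x (f x).
Proof.
move=> H; have [f Hf] : {f : T -> U & forall x, A x -> R x (f x)}.
  apply: (@choice T U (fun x y => A x -> R x y)) => x.
  have [Ax|nAx] := pselect (A x); first by have [y ?] := H x Ax; exists y.
  by exists u0.
by exists f.
Qed.

Lemma cle_total T U (A : set T) (B : set U) (t0 : T) (u0 : U) : cle A B \/ cle B A.
Proof.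
pose P (G : set (T * U)) := (forall p, G p -> A p.1 /\ B p.2) /\
  (forall p q, G p -> G q -> p.1 = q.1 -> p.2 = q.2) /\
  (forall p q, G p -> G q -> p.2 = q.2 -> p.1 = q.1).
have [G [[GAB [Gf Gi]] Gmax]] : exists G, P G /\ forall B, G `<` B -> ~ P B.
  apply: Zorn_bigcup => F FP Ftot; split; last split.
  - by move=> p [X FX Xp]; have [+ _] := FP X FX; apply.
  - move=> p q [X FX Xp] [Y FY Yq].
    have [XY|YX] := Ftot X Y FX FY.
      by have [_ [+ _]] := FP Y FY; apply; [apply: XY|].
    by have [_ [+ _]] := FP X FX; apply; [|apply: YX].
  - move=> p q [X FX Xp] [Y FY Yq].
    have [XY|YX] := Ftot X Y FX FY.
      by have [_ [_ +]] := FP Y FY; apply; [apply: XY|].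
    by have [_ [_ +]] := FP X FX; apply; [|apply: YX].
have [dA|ndA] := pselect (forall a, A a -> exists b, G (a, b)).
  left; have [f Hf] := rel_fun u0 dA; exists f; split.
    by move=> x Ax; have [_ +] := GAB _ (Hf x Ax).
  move=> x y Ax Ay e; have := Gi _ _ (Hf x Ax) (Hf y Ay); apply; exact: e.
have [dB|ndB] := pselect (forall b, B b -> exists a, G (a, b)).
  right; have [f Hf] := rel_fun t0 dB; exists f; split.
    by move=> x Ax; have [+ _] := GAB _ (Hf x Ax).
  move=> x y Ax Ay e; have := Gf _ _ (Hf x Ax) (Hf y Ay); apply; exact: e.
exfalso.
have [a Aa na] : exists2 a, A a & forall b, ~ G (a, b).
  apply: contra_notP ndA => H a1 Aa1; apply: contra_notP H => H; exists a1 => // b Gb.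
  by apply: H; exists b.
have [b Bb nb] : exists2 b, B b & forall a, ~ G (a, b).
  apply: contra_notP ndB => H b1 Bb1; apply: contra_notP H => H; exists b1 => // a1 Ga.
  by apply: H; exists a1.
apply: (Gmax (G `|` [set (a, b)])).
  split; first by move=> x Gx; left.
  by move=> /(_ (a, b)) /(_ (or_intror erefl)) /na.
split; last split.
- by move=> p [/GAB //|->].
- move=> p q [Gp|->] [Gq|->] //=.
  + exact: Gf.
  + by case: p Gp => x y Gp /= e; rewrite e in Gp; exfalso; apply: (na y).
  + by case: q Gq => x y Gq /= e; rewrite -e in Gq; exfalso; apply: (na y).
- move=> p q [Gp|->] [Gq|->] //=.
  + exact: Gi.
  + by case: p Gp => x y Gp /= e; rewrite e in Gp; exfalso; apply: (nb x).
  + by case: q Gq => x y Gq /= e; rewrite -e in Gq; exfalso; apply: (nb x).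
Qed.

Lemma cle_bool2 C (M : set C) : cle [set: nat] M -> cle ([set: bool] `*` [set: bool]) M.
Proof.
move=> hM; apply: (cle_trans _ hM).
exists (fun p : bool * bool => nat_of_bool p.1 + 2 * nat_of_bool p.2)%N.
by split => // -[[] []] [[] []].
Qed.

Lemma cle_rearr C (M : set C) :
  cle ((M `*` [set: bool]) `*` (M `*` [set: bool])) ((M `*` M) `*` ([set: bool] `*` [set: bool])).
Proof.
exists (fun q : (C * bool) * (C * bool) => ((q.1.1, q.2.1), (q.1.2, q.2.2))); split.
  by move=> [[a x] [b y]] [[/= Ma _] [/= Mb _]].
by move=> [[a x] [b y]] [[a' x'] [b' y']] _ _ [-> -> -> ->].
Qed.

Lemma cle_MMbb C (M : set C) : cle [set: nat] M -> cle (M `*` M) M ->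
  cle ((M `*` M) `*` ([set: bool] `*` [set: bool])) M.
Proof.
move=> hn hM; apply: (cle_trans _ hM); apply: cle_prod; [exact: hM|exact: cle_bool2].
Qed.

Record hexa (A B C D E F : Prop) : Prop := Hexa { hx1 : A; hx2 : B; hx3 : C; hx4 : D; hx5 : E; hx6 : F }.

Section Hess.
Variables (C : Type) (Y : set C) (e : nat -> C) (he : injon [set: nat] Y e).

Let pk (p : nat * nat) : nat := pickle p.
Let G0 : set ((C * C) * C) :=
  [set q | exists i j, q = ((e i, e j), e (pk (i, j)))].
Let S (G : set ((C * C) * C)) : set C := [set a | exists c, G ((a, a), c)].
Let P (G : set ((C * C) * C)) :=
  hexa (G = set0 \/ G0 `<=` G) (S G `<=` Y)
      (forall p c, G (p, c) -> [/\ S G p.1, S G p.2 & S G c])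
      (forall a b, S G a -> S G b -> exists c, G ((a, b), c))
      (forall p c c', G (p, c) -> G (p, c') -> c = c')
      (forall p p' c, G (p, c) -> G (p', c) -> p = p').

Let einj i j : e i = e j -> i = j.
Proof. by case: he => _ h; apply: h. Qed.

Let SG0 a : S G0 a <-> exists i, a = e i.
Proof.
split; first by move=> [c [i [j [-> _ _]]]]; exists i.
by move=> [i ->]; exists (e (pk (i, i))), i, i.
Qed.

Let PG0 : P G0.
Proof.
split.
- by right.
- by move=> a /SG0 [i ->]; case: he => + _; apply.
- move=> p c [i [j [-> ->]]]; split => /=; apply/SG0.
  + by exists i.
  + by exists j.
  + by exists (pk (i, j)).
- move=> a b /SG0 [i ->] /SG0 [j ->]; exists (e (pk (i, j))); by exists i, j.
- move=> p c c' [i [j [-> ->]]] [i' [j' [[/einj <- /einj <-] ->]]] //.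
- move=> p p' c [i [j [-> ->]]] [i' [j' [-> ]]] /einj.
  by rewrite /pk => /(pcan_inj pickleK) [-> ->].
Qed.

Lemma hessenberg_aux : cle (Y `*` Y) Y.
Proof.
have [G [PG Gmax]] : exists G, P G /\ forall B, G `<` B -> ~ P B.
  apply: Zorn_bigcup => F FP Ftot.
  have SU a : S (\bigcup_(X in F) X) a <-> exists2 X, F X & S X a.
    split; first by move=> [c [X FX Xc]]; exists X => //; exists c.
    by move=> [X FX [c Xc]]; exists c; exists X.
  split.
  - have [[X [FX G0X]]|nX] := pselect (exists X, F X /\ G0 `<=` X).
      by right; move=> q G0q; exists X => //; apply: G0X.
    left; apply/seteqP; split => // q [X FX Xq].
    have [+ _ _ _ _ _] := FP X FX; case => [X0|G0X]; first by rewrite X0 in Xq.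
    by exfalso; apply: nX; exists X.
  - move=> a /SU [X FX SXa]; have [_ + _ _ _ _] := FP X FX; apply; exact: SXa.
  - move=> p c [X FX Xpc]; have [_ _ + _ _ _] := FP X FX.
    move=> /(_ p c Xpc) [h1 h2 h3]; split; apply/SU; by exists X.
  - move=> a b /SU [X FX SXa] /SU [X' FX' SX'b].
    have [XX'|X'X] := Ftot X X' FX FX'.
      have [_ _ _ + _ _] := FP X' FX'; move=> /(_ a b) [].
      + by case: SXa => c Xc; exists c; apply: XX'.
      + exact: SX'b.
      by move=> c Xc; exists c, X'.
    have [_ _ _ + _ _] := FP X FX; move=> /(_ a b) [].
    + exact: SXa.
    + by case: SX'b => c Xc; exists c; apply: X'X.
    by move=> c Xc; exists c, X.
  - move=> p c c' [X FX Xc] [X' FX' Xc'].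
    have [XX'|X'X] := Ftot X X' FX FX'.
      by have [_ _ _ _ H _] := FP X' FX'; exact: (H p c c' (XX' _ Xc) Xc').
    by have [_ _ _ _ H _] := FP X FX; exact: (H p c c' Xc (X'X _ Xc')).
  - move=> p p' c [X FX Xc] [X' FX' Xc'].
    have [XX'|X'X] := Ftot X X' FX FX'.
      by have [_ _ _ _ _ H] := FP X' FX'; exact: (H p p' c (XX' _ Xc) Xc').
    by have [_ _ _ _ _ H] := FP X FX; exact: (H p p' c Xc (X'X _ Xc')).
case: PG => G0G SY Gdom Gtot Gfun Ginj.
have {}G0G : G0 `<=` G.
  case: G0G => // G0E; exfalso; apply: (Gmax G0) => //; rewrite G0E; split => //.
  by move=> /(_ ((e 0, e 0), e (pk (0, 0)))) /(_ (ex_intro _ 0 (ex_intro _ 0 erefl))).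
set M := S G.
have eM i : M (e i).
  have : S G0 (e i) by apply/SG0; exists i.
  by case=> c Hc; exists c; apply: G0G.
have natM : cle [set: nat] M by exists e; split => // i j _ _; apply: einj.
have MM : cle (M `*` M) M.
  have [f Hf] := @rel_fun _ _ (M `*` M) (fun p c => G (p, c)) (e 0)
    (fun '(a, b) Mp => Gtot a b Mp.1 Mp.2).
  exists f; split.
    by move=> p /Hf /Gdom [].
  by move=> p p' /Hf Gp /Hf Gp' E; apply: Ginj Gp _; rewrite E.
have [YM|MY] := cle_total (Y `\` M) M (e 0) (e 0).
-
  have YMb : cle Y (M `*` [set: bool]).
    case: YM => g [g1 g2].
    exists (fun y => match pselect (M y) with left _ => (y, true)
                        | right _ => (g y, false) end); split.
      by move=> y Yy; case: pselect => [My|nMy]; split => //; apply: g1.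
    move=> y y' Yy Yy'; case: pselect => [My|nMy]; case: pselect => [My'|nMy'] //.
      by case.
    by case=> /g2; apply.
  apply: (cle_trans (cle_prod YMb YMb)); apply: (cle_trans (@cle_rearr _ M)).
  apply: (cle_trans (cle_MMbb natM MM)); exact: cle_sub.
- exfalso.
  case: MY => g [g1 g2].
  set N := g @` M.
  have NY x : N x -> Y x /\ ~ M x by move=> [m Mm <-]; apply: g1.
  have [gi Hgi] := @rel_fun _ _ N (fun x m => M m /\ g m = x) (e 0)
    (fun x => fun '(ex_intro2 m Mm gm) => ex_intro _ m (conj Mm gm)).
  set M' := M `|` N.
  set D := [set p : C * C | (M' p.1 /\ M' p.2) /\ ~ (M p.1 /\ M p.2)].
  have DN : cle D N.
    pose pi x := match pselect (M x) with left _ => x | right _ => gi x end.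
    have piM x : M' x -> M (pi x).
      by rewrite /pi; case: pselect => // nMx [//|/Hgi []].
    have piI x y : M' x -> M' y -> pi x = pi y -> M x = M y -> x = y.
      move=> M'x M'y; rewrite /pi; case: pselect => Mx; case: pselect => My.
      - by move=> E _.
      - by move=> _ E; exfalso; apply: My; rewrite -E.
      - by move=> _ E; exfalso; apply: Mx; rewrite E.
      move=> E _; case: M'x => // Nx; case: M'y => // Ny.
      by have [_ <-] := Hgi x Nx; have [_ <-] := Hgi y Ny; rewrite E.
    have step1 : cle D ((M `*` M) `*` ([set: bool] `*` [set: bool])).
      exists (fun p => ((pi p.1, pi p.2), (asbool (M p.1), asbool (M p.2)))); split.
        by move=> [x y] [[/= Mx My] _]; split => //; split => /=; apply: piM.
      move=> [x y] [x' y'] [[/= Mx My] _] [[/= Mx' My'] _] [e1 e2 e3 e4].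
      congr pair; apply: piI => //.
      + by apply/propext; split => /asboolP; [rewrite e3|rewrite -e3] => /asboolP.
      + by apply/propext; split => /asboolP; [rewrite e4|rewrite -e4] => /asboolP.
    apply: (cle_trans step1); apply: (cle_trans (cle_MMbb natM MM)).
    exists g; split; first by move=> m Mm; exists m.
    exact: g2.
  case: DN => h [h1 h2].
  pose G' := G `|` [set q | D q.1 /\ q.2 = h q.1].
  have SG' a : S G' a <-> M' a.
    split.
      move=> [c [Gc|[[[Ma _] _] _]]]; last by [].
      by left; exists c.
    move=> [Ma|Na].
      by case: Ma => c Gc; exists c; left.
    exists (h (a, a)); right; split => //=; split; first by split; right.
    by case=> /= Ma _; have [_] := NY a Na.
  apply: (Gmax G').
    split; first by move=> q Gq; left.
    move=> G'G; have m0 := eM 0.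
    have Ngm : N (g (e 0)) by exists (e 0).
    have : S G' (g (e 0)) by apply/SG'; right.
    case=> c /G'G Gc; have [_] := NY _ Ngm; apply; exists c; exact: Gc.
  split.
  + by right => q /G0G; left.
  + by move=> a /SG' [Ma|/NY []//]; apply: SY.
  + move=> p c [/Gdom [h1' h2' h3']|[[[Mp1 Mp2] nM] /= ->]].
      by split; apply/SG'; left.
    split; apply/SG'; [exact: Mp1|exact: Mp2|right; apply: h1; split; [split|]] => //.
  + move=> a b /SG' Ma /SG' Mb.
    have [[Ma' Mb']|nMM] := pselect (M a /\ M b).
      by have [c Gc] := Gtot a b Ma' Mb'; exists c; left.
    by exists (h (a, b)); right.
  + move=> p c c' [Gc|[[_ nM] /= ->]] [Gc'|[[_ nM'] /= ->]] //.
    * exact: Gfun Gc Gc'.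
    * by exfalso; apply: nM'; have [? ? _] := Gdom _ _ Gc.
    * by exfalso; apply: nM; have [? ? _] := Gdom _ _ Gc'.
  + move=> p p' c [Gc|[Dp /= cE]] [Gc'|[Dp' /= cE']].
    * exact: Ginj Gc Gc'.
    * have Nc : N c by rewrite cE'; apply: h1.
      by have [_ nMc] := NY c Nc; have [_ _ Mc] := Gdom _ _ Gc.
    * have Nc : N c by rewrite cE; apply: h1.
      by have [_ nMc] := NY c Nc; have [_ _ Mc] := Gdom _ _ Gc'.
    * by apply: h2 => //; rewrite -cE -cE'.
Qed.

End Hess.

Lemma hessenberg C (Y : set C) : cle [set: nat] Y -> cle (Y `*` Y) Y.
Proof. by move=> [e he]; apply: hessenberg_aux he. Qed.

Lemma cle_nat_inh C (Y : set C) : cle [set: nat] Y -> C.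
Proof.
move=> H; have : exists c : C, True by case: H => e _; exists (e 0).
by move=> /cid [c _].
Qed.

Lemma cle_bigcup I T C (Y : set C) (D : set I) (F : I -> set T) :
  cle [set: nat] Y -> cle D Y -> (forall i, D i -> cle (F i) Y) ->
  cle (\bigcup_(i in D) F i) Y.
Proof.
move=> hY [d [d1 d2]] hF; have c0 := cle_nat_inh hY.
have [[x0 [i0 Di0 _]]|ne] := pselect (exists x, (\bigcup_(i in D) F i) x); last first.
  apply: (cle_empty _ c0); apply/seteqP; split => // x Ux; apply: ne; by exists x.
have [idx Hidx] := @rel_fun _ _ (\bigcup_(i in D) F i) (fun x i => D i /\ F i x) i0
  (fun x '(ex_intro2 i Di Fi) => ex_intro _ i (conj Di Fi)).
have [fi Hfi] := @rel_fun _ _ D (fun i f => injon (F i) Y f) (fun=> c0) hF.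
apply: (cle_trans _ (hessenberg hY)).
exists (fun x => (d (idx x), fi (idx x) x)); split.
  move=> x Ux; have [Di Fx] := Hidx x Ux; split => /=; first exact: d1.
  by have [+ _] := Hfi _ Di; apply.
move=> x y Ux Uy [] /d2 E; have [Dx Fx] := Hidx x Ux; have [Dy Fy] := Hidx y Uy.
rewrite E // => E2; have [_ +] := Hfi _ Dy; apply => //; by rewrite -E.
Qed.

Lemma list_fin T (j : set T) (s : list T) : (forall x, j x -> List.In x s) -> finite_set j.
Proof.
move=> H; apply: (sub_finite_set H) => {H j}.
elim: s => [|a s IH].
  have -> : (fun x => List.In x [::]) = @set0 T by apply/funext => x; apply/propext; split.
  exact: finite_set0.
have -> : (fun x => List.In x (a :: s)) = [set a] `|` (fun x => List.In x s).
  by apply/funext => x; apply/propext; split => /= [[->|h]|[->|h]]; [left|right|left|right].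
by rewrite finite_setU; split => //; apply: finite_set1.
Qed.

Lemma fin_list T (j : set T) : finite_set j -> exists s : list T, forall x, j x <-> List.In x s.
Proof.
move=> [n] /card_eqPle [/card_cle /(_ (inhabits 0)) [f [f1 f2]] _].
have [[x0 jx0]|nj] := pselect (exists x, j x); last first.
  by exists [::] => x; split => // jx; apply: nj; exists x.
pose g k := match pselect (exists x, j x /\ f x = k) with
  left h => projT1 (cid h) | right _ => x0 end.
have gj k : j (g k) by rewrite /g; case: pselect => // h; case: (cid h) => y [].
have gf x : j x -> g (f x) = x.
  move=> jx; rewrite /g; case: pselect => [h|[]]; last by exists x.
  by case: (cid h) => y [jy e] /=; apply: f2.
exists (List.map g (List.seq 0 n)) => x; split.
  move=> jx; apply/List.in_map_iff; exists (f x); split; first exact: gf.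
  have := f1 x jx; rewrite /= => lt; apply/List.in_seq; split; first exact: le_0_n.
  by apply/ltP.
by move=> /List.in_map_iff [k [<- _]].
Qed.

Lemma cle_finite T C (A : set T) (Y : set C) : cle [set: nat] Y -> finite_set A -> cle A Y.
Proof.
move=> hY [n] /card_eqPle [/card_cle /(_ (inhabits 0)) hA _].
apply: (cle_trans hA); apply: cle_trans hY; exact: cle_sub.
Qed.

Lemma cle_lists T C (X : set T) (Y : set C) (t0 : T) :
  cle [set: nat] Y -> cle X Y -> cle [set s : list T | forall x, List.In x s -> X x] Y.
Proof.
move=> hY hX; have [y0 Yy0] : exists y, Y y by case: (hY) => e [h _]; exists (e 0); apply: h.
pose Ln n := [set s : list T | size s = n /\ forall x, List.In x s -> X x].
have -> : [set s : list T | forall x, List.In x s -> X x] = \bigcup_(n in [set: nat]) Ln n.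
  apply/funext => s; apply/propext; split; first by move=> H; exists (size s).
  by move=> [n _ [_ H]].
apply: cle_bigcup => //.
move=> n _; elim: n => [|n IH].
  exists (fun=> y0); split => // s s' [/size0nil -> _] [/size0nil -> _] //.
apply: (cle_trans _ (hessenberg hY)); apply: (cle_trans _ (cle_prod hX IH)).
exists (fun s => (head t0 s, behead s)); split.
  move=> [|a s] [//= [sz] H]; split => /=; first by apply: H; left.
  by split => // x hx; apply: H; right.
by move=> [|a s] [|a' s'] [//= _ _] [//= _ _] [-> ->].
Qed.

Lemma cle_finsubs T C (X : set T) (Y : set C) (t0 : T) :
  cle [set: nat] Y -> cle X Y -> cle [set j : set T | finite_set j /\ j `<=` X] Y.
Proof.
move=> hY hX; apply: (cle_trans _ (cle_lists t0 hY hX)).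
have [f Hf] := @rel_fun _ _ [set j : set T | finite_set j /\ j `<=` X]
  (fun j s => forall x, j x <-> List.In x s) [::] (fun j '(conj fj _) => fin_list fj).
exists f; split.
  by move=> j [fj jX] x /(Hf j (conj fj jX)) /jX.
move=> j j' Hj Hj' E; apply/funext => x; apply/propext.
by rewrite (Hf j Hj) (Hf j' Hj') E.
Qed.

Lemma fU T (A B : set T) : finite_set A -> finite_set B -> finite_set (A `|` B).
Proof. by move=> a b; rewrite finite_setU. Qed.

Fixpoint supp_fin L (x : lpoint L) {struct x} : finite_set (supp x) :=
  match x return finite_set (supp x) with
  | Atom a => finite_set1 a
  | Tup x1 xs => fU (supp_fin x1)
      ((fix aux (l : list (lpoint L)) : finite_set
          ((fix supps (l : list (lpoint L)) : set L :=
              match l with nil => set0 | y :: l' => supp y `|` supps l' end) l) :=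
          match l with nil => finite_set0 _ | y :: l' => fU (supp_fin y) (aux l') end) xs)
  end.

Lemma pow_list_fin T (s : list T) : finite_set [set j : set T | j `<=` (fun x => List.In x s)].
Proof.
elim: s => [|a s IH].
  apply: (sub_finite_set (B := [set set0])); last exact: finite_set1.
  move=> j /= js; apply/funext => x; apply/propext; split => [/js|] //.
set P := [set j : set T | j `<=` (fun x => List.In x s)].
apply: (sub_finite_set (B := P `|` (fun k => k `|` [set a]) @` P)); last first.
  by apply: fU => //; apply: finite_image.
move=> j /= js.
have jD : (j `\` [set a]) `<=` (fun x => List.In x s).
  by move=> x [/js [->|//] /= h]; exfalso; apply: h.
have [ja|nja] := pselect (j a).
  right; exists (j `\` [set a]) => //; apply/funext => x; apply/propext; split.
    by move=> [[]|->].
  move=> jx; have [->|ne] := pselect (x = a); [right|left] => //.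
left; suff -> : j = j `\` [set a] by [].
apply/funext => x; apply/propext; split; last by case.
by move=> jx; split => // /= xa; apply: nja; rewrite -xa.
Qed.

Lemma pow_fin T (i : set T) : finite_set i -> finite_set [set j : set T | j `<=` i].
Proof.
move=> /fin_list [s Hs]; apply: sub_finite_set (pow_list_fin s).
by move=> j /= ji x /ji /Hs.
Qed.

Lemma restr_fin L (A : set (lpoint L)) (i : set L) :
  finitary A -> finite_set i -> finite_set (restr A i).
Proof.
move=> hA hi.
apply: (sub_finite_set (B := \bigcup_(j in [set j | j `<=` i]) [set a | A a /\ supp a = j])).
  by move=> a [Aa si]; exists (supp a).
apply: bigcup_finite; first exact: pow_fin.
move=> j ji; apply: hA; exact: sub_finite_set ji hi.
Qed.


Lemma fin_pairs (a : nat) (b : nat -> nat) :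
  finite_set [set p : nat * nat | (p.1 < a)%N /\ (p.2 < b p.1)%N].
Proof.
apply: (sub_finite_set (B := \bigcup_(t in `I_a) (fun s => (t, s)) @` `I_(b t))).
  by move=> [t s] [/= ta sb]; exists t => //; exists s.
apply: bigcup_finite; first exact: finite_II.
by move=> t _; apply: finite_image; exact: finite_II.
Qed.

Section Main.
Variables (L : Type) (hL : infinite_set [set: L]) (C : Type) (K : nat -> set C)
  (d : set L) (hd : finite_set d) (n : nat) (hn : (1 <= n)%N) (m : nat -> nat)
  (A : nat -> nat -> set (lpoint L))
  (hW : forall t s, (1 <= t <= n)%N -> (s < m t)%N -> finitary (A t s))
  (hA : forall t s, (1 <= t <= n)%N -> (s < m t)%N -> (A t s #= K t)%card)
  (hK0 : forall t, (1 <= t <= n)%N -> infinite_set (K t))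
  (hKlt : forall t u, (1 <= t)%N -> (t < u)%N -> (u <= n)%N -> card_lt (K t) (K u)).

Let t0 : L.
Proof. by have /infinite_setN0 /cid [x _] := hL. Qed.

Let c0 : C.
Proof. by have /infinite_setN0 /cid [x _] := hK0 (t := 1) (ltac:(by rewrite hn)). Qed.

Let hY v : (1 <= v <= n)%N -> cle [set: nat] (K v).
Proof. by move=> hv; apply: card_cle (inhabits c0); apply/infiniteP/hK0. Qed.

Let Kle t u : (1 <= t)%N -> (t <= u)%N -> (u <= n)%N -> cle (K t) (K u).
Proof.
move=> t1 tu un; have [->|ltu] := eqVneq t u; first exact: cle_refl.
have tu' : (t < u)%N by rewrite ltn_neqAle ltu.
by have [+ _] := hKlt t1 tu' un; move/card_cle; apply; apply: inhabits c0.
Qed.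

Let AK t s : (1 <= t <= n)%N -> (s < m t)%N -> cle (A t s) (K t) /\ cle (K t) (A t s).
Proof.
move=> ht hs; have /card_eqPle [h1 h2] := hA ht hs; split.
  exact: card_cle h1 (inhabits c0).
exact: card_cle h2 (inhabits (Atom t0)).
Qed.

Definition Xs v := \bigcup_(p in [set p : nat * nat | (1 <= p.1 <= v)%N /\ (p.2 < m p.1)%N])
  \bigcup_(a in A p.1 p.2) supp a.

Let fiber u r j := [set b | A u r b /\ supp b `&` Xs u.-1 = j].

Lemma fiber_inf u r : (2 <= u <= n)%N -> (r < m u)%N ->
  exists j, finite_set j /\ infinite_set (fiber u r j).
Proof.
move=> hu hr; apply: contra_notP (fun H => H) => nE.
set v := u.-1.
have v1 : (1 <= v)%N by rewrite /v; move: hu => /andP []; lia.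
have vu : (v < u)%N by rewrite /v; move: hu => /andP []; lia.
have un : (u <= n)%N by case/andP: hu.
have vn : (1 <= v <= n)%N by rewrite /v; move: hu => /andP []; lia.
have Y := hY vn.
have hX : cle (Xs v) (K v).
  apply: cle_bigcup => //.
    apply: (cle_trans _ Y); exists (fun p : nat * nat => pickle p); split => // p q _ _.
    exact: (pcan_inj pickleK).
  move=> [t s] /= [ht hs]; apply: cle_bigcup => //.
    have htn : (1 <= t <= n)%N.
      by move: ht vn => /andP[] ? ? /andP[] ? ?; apply/andP; split; lia.
    apply: (cle_trans (AK htn hs).1); apply: Kle; move: ht vn => /andP[] ? ? /andP[] ? ?; lia.
  move=> a _; apply: cle_finite Y _; exact: supp_fin.
have hJ := cle_finsubs t0 Y hX.
have cover : A u r `<=` \bigcup_(j in [set j : set L | finite_set j /\ j `<=` Xs v]) fiber u r j.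
  move=> b Ab; exists (supp b `&` Xs v); last by split.
  split; [exact: finite_setIl (supp_fin b)|by move=> x []].
have hAu : cle (A u r) (K v).
  apply: (cle_trans (cle_sub cover)); apply: cle_bigcup => // j [fj _].
  apply: cle_finite Y _; apply: contra_notP (nE) => H; by exists j.
have hun : (1 <= u <= n)%N by rewrite un andbT (leq_trans v1 (ltnW vu)).
have := cle_card (cle_trans (AK hun hr).2 hAu).
by have [_] := hKlt v1 vu un.
Qed.


Lemma main_sec : exists i : set L, finite_set i /\ d `<=` i /\
    forall t u s r, (1 <= t)%N -> (t < u)%N -> (u <= n)%N ->
      (s < m t)%N -> (r < m u)%N ->
      card_lt (restr (A t s) i) (restr (A u r) i).
Proof.
have [jf Hjf] : {jf : nat * nat -> set L & forall p, (2 <= p.1 <= n)%N -> (p.2 < m p.1)%N ->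
    finite_set (jf p) /\ infinite_set (fiber p.1 p.2 (jf p))}.
  apply: (@choice _ _ (fun p j => (2 <= p.1 <= n)%N -> (p.2 < m p.1)%N ->
    finite_set j /\ infinite_set (fiber p.1 p.2 j))) => -[u r].
  have [[h1 h2]|nh] := pselect ((2 <= u <= n)%N /\ (r < m u)%N).
    by have [j Hj] := fiber_inf h1 h2; exists j.
  by exists set0 => /= h1 h2; exfalso; apply: nh.
set Ix := [set p : nat * nat | (2 <= p.1 <= n)%N /\ (p.2 < m p.1)%N].
set J := d `|` \bigcup_(p in Ix) jf p.
have finJ : finite_set J.
  apply: fU => //; apply: bigcup_finite.
    apply: sub_finite_set (fin_pairs n.+1 m) => -[u r] /= [/andP [_ ?] ?]; split => //; lia.
  by move=> p [h1 h2]; have [] := Hjf p h1 h2.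
suff: forall k, (k.+1 <= n)%N -> exists i : set L, [/\ finite_set i, J `<=` i &
    forall t u s r, (1 <= t)%N -> (t < u)%N -> (u <= k.+1)%N ->
      (s < m t)%N -> (r < m u)%N ->
      card_lt (restr (A t s) i) (restr (A u r) i)].
  move=> /(_ n.-1); rewrite prednK // => /(_ (leqnn n)) [i [fi Ji H]].
  by exists i; split => //; split => // x dx; apply: Ji; left.
elim => [_|k IH kn].
  by exists J; split => // t u s r t1 tu u1; exfalso; lia.
have [i [fi Ji Hi]] := IH (ltnW kn).
set Dv := [set p : nat * nat | (1 <= p.1 <= k.+1)%N /\ (p.2 < m p.1)%N].
set U := \bigcup_(p in Dv) restr (A p.1 p.2) i.
have finU : finite_set U.
  apply: bigcup_finite.
    apply: sub_finite_set (fin_pairs k.+2 m) => -[t s] /= [/andP [? ?] ?]; split => //; lia.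
  move=> [t s] /= [ht hs]; apply: restr_fin fi; apply: hW hs.
  by move: ht => /andP [? ?]; apply/andP; split; lia.
have [N HN] : exists N, cle U `I_N.
  case: finU => N /card_eqPle [h _]; exists N; exact: card_cle h (inhabits 0%N).
have h2n : (2 <= k.+2 <= n)%N by apply/andP; split; lia.
have [er Her] := @rel_fun _ _ [set r | (r < m k.+2)%N]
  (fun r f => injon [set: nat] (fiber k.+2 r (jf (k.+2, r))) f) (fun=> Atom t0)
  (fun r hr => match Hjf (k.+2, r) h2n hr with
     conj _ inf => card_cle ((infiniteP _).1 inf) (inhabits (Atom t0)) end).
set E := \bigcup_(p in [set p : nat * nat | (p.1 < m k.+2)%N /\ (p.2 < N.+1)%N])
  supp (er p.1 p.2).
have finE : finite_set E.
  apply: bigcup_finite; first exact: (fin_pairs (m k.+2) (fun=> N.+1)).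
  by move=> p _; exact: supp_fin.
have pres t s : (1 <= t <= k.+1)%N -> (s < m t)%N -> restr (A t s) (i `|` E) = restr (A t s) i.
  move=> ht hs; apply/funext => a; apply/propext; split; last first.
    by move=> [Aa sa]; split => // x /sa; left.
  move=> [Aa sa]; split => // x sx.
  have Xx : Xs k.+1 x by exists (t, s) => //; exists a.
  have [//|[[r k'] [/= hr hk] xs]] := sa x sx.
  have [e1 _] := Her r hr; have [_ E12] := e1 k' I.
  have : (supp (er r k') `&` Xs k.+1) x by split.
  rewrite E12 => jx; apply: Ji; right; exists (k.+2, r) => //; split => //=.
exists (i `|` E); split.
- exact: fU.
- by move=> x /Ji; left.
move=> t u s r t1 tu uk hs hr.
have [uv|uw] : (u <= k.+1)%N \/ u = k.+2 by lia.
  rewrite !pres //; first exact: Hi.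
  + by apply/andP; split; lia.
  + by apply/andP; split; lia.
subst u; rewrite (pres t s) //; last by apply/andP; split; lia.
have h1 : cle (restr (A t s) i) `I_N.
  apply: cle_trans HN; apply: cle_sub => a ra; exists (t, s) => //; split => //=.
  by apply/andP; split; lia.
have h2 : cle `I_N.+1 (restr (A k.+2 r) (i `|` E)).
  have [e1 e2] := Her r hr.
  exists (er r); split; last by move=> x y _ _; apply: e2.
  move=> k' hk'; have [Ae _] := e1 k' I; split => // x sx; right.
  by exists (r, k') => //; split.
have h3 : cle `I_N `I_N.+1 by apply: cle_sub => x /= hx; apply: ltnW.
split; first exact: cle_card (cle_trans h1 (cle_trans h3 h2)).
move=> H; have := card_le_trans (card_le_trans (cle_card h2) H) (cle_card h1).
by rewrite card_le_II ltnn.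
Qed.

End Main.

Unset Implicit Arguments. Set Strict Implicit.

Theorem mainTheorem8
  (L : Type) (hL : infinite_set [set: L])            (* kappa = |L| infinite *)
  (C : Type) (K : nat -> set C)                       (* kappa_t = |K t| *)
  (d : set L) (hd : finite_set d)                     (* d in I *)
  (n : nat) (hn : (1 <= n)%N)
  (m : nat -> nat)                                    (* S_t = {0,...,m t - 1} *)
  (A : nat -> nat -> set (lpoint L))                   (* A^{st} = A t s *)
  (hW : forall t s, (1 <= t <= n)%N -> (s < m t)%N -> finitary (A t s))
  (hA : forall t s, (1 <= t <= n)%N -> (s < m t)%N -> (A t s #= K t)%card)
  (hK0 : forall t, (1 <= t <= n)%N -> infinite_set (K t))
  (hKlt : forall t u, (1 <= t)%N -> (t < u)%N -> (u <= n)%N -> card_lt (K t) (K u))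
  (hKL : forall u, (1 <= u <= n)%N -> (K u #<= [set: L])%card) :
  exists i : set L, finite_set i /\ d `<=` i /\
    forall t u s r, (1 <= t)%N -> (t < u)%N -> (u <= n)%N ->
      (s < m t)%N -> (r < m u)%N ->
      card_lt (restr (A t s) i) (restr (A u r) i).
Proof.
exact: (main_sec hL hd hn hW hA hK0 hKlt).
Qed.
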